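(* Let $\mathcal{K}^{\langle\infty\rangle}$ be a planar unbounded simple nested fractal whose number of essential fixed points is $k=3$. Then $\mathcal{K}^{\langle\infty\rangle}$ has the good labelling property.
   Context: Setting: $L>1$, $N\ge2$, $\nu_1=0,\dots,\nu_N\in\mathbb{R}^2$, $\Psi_i(x)=x/L+\nu_i$, and $\mathcal{K}^{\langle 0\rangle}=\bigcup_i\Psi_i(\mathcal{K}^{\langle 0\rangle})$ is a planar simple nested fractal (essential fixed points $V_0^{\langle0\rangle}$: fixed points $x$ for which there are another fixed point $y$ and $\Psi_i\ne\Psi_j$ with $\Psi_i(x)=\Psi_j(y)$; open set condition, nesting, symmetry with respect to perpendicular bisectors of pairs of essential fixed points, connectivity); $k=\#V_0^{\langle0\rangle}$, and $V_0^{\langle0\rangle}$ spans a regular $k$-gon. $\mathcal{K}^{\langle M\rangle}=L^M\mathcal{K}^{\langle 0\rangle}$, $\mathcal{K}^{\langle\infty\rangle}=\bigcup_{M\ge0}\mathcal{K}^{\langle M\rangle}$. An $M$-complex is $\Delta_M=\mathcal{K}^{\langle M\rangle}+\nu_{\Delta_M}$ with $\nu_{\Delta_M}=\sum_{j=M+1}^{J}L^j\nu_{i_j}$ ($J\ge M+1$), vertex set $V(\Delta_M)=L^MV_0^{\langle0\rangle}+\nu_{\Delta_M}$; $V_M^{\langle M\rangle}=L^MV_0^{\langle0\rangle}$ and $V_M^{\langle\infty\rangle}$ is the union of all $V(\Delta_M)$. With $\mathcal{A}$ an alphabet of $k$ symbols and $\mathcal{R}_M$ the $k$ rotations about the barycenter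 of $\mathcal{K}^{\langle M\rangle}$ preserving $V_M^{\langle M\rangle}$, a good labelling function of order $M$ is $\ell_M:V_M^{\langle\infty\rangle}\to\mathcal{A}$, bijective on $V_M^{\langle M\rangle}$, such that for each $M$-complex $\Delta_M=\mathcal{K}^{\langle M\rangle}+\nu_{\Delta_M}$ there is $R_{\Delta_M}\in\mathcal{R}_M$ with $\ell_M(v)=\ell_M(R_{\Delta_M}(v-\nu_{\Delta_M}))$, $v\in V(\Delta_M)$. The good labelling property means that a good labelling function of some order $M\in\mathbb{Z}$ exists. *)

(* Defs.v *)
From mathcomp Require Import all_boot all_algebra.
From mathcomp Require Import all_classical all_reals all_analysis.
Set Implicit Arguments. Unset Strict Implicit. Unset Printing Implicit Defensive.
Import GRing.Theory Num.Theory numFieldNormedType.Exports.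
Local Open Scope classical_set_scope.
Local Open Scope ring_scope.

Section NestedFractal.
Variable R : realType.
Notation pt := (R * R)%type.

(* ---------- the IFS  Psi_i(x) = x/L + nu_i,  i = 0..N-1  (paper: 1..N) ---------- *)
Variables (L : R) (N : nat) (nu : nat -> pt).

Definition Psi (i : nat) (x : pt) : pt := L^-1 *: x + nu i.

Definition psiw (w : seq nat) (x : pt) : pt := foldr Psi x w.

Definition word (n : nat) (w : seq nat) : Prop :=
  size w = n /\ all (fun i => (i < N)%N) w.

Definition fixed_points : set pt :=
  [set x | exists i, (i < N)%N /\ Psi i x = x].

Definition essential_fixed_points : set pt :=
  [set x | fixed_points x /\
     exists y, fixed_points y /\
       exists i j, [/\ (i < N)%N, (j < N)%N, Psi i <> Psi j & Psi i x = Psi j y]].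

Definition is_attractor (K : set pt) : Prop :=
  [/\ compact K, K !=set0 &
      K = \bigcup_(i in [set i : nat | (i < N)%N]) (Psi i @` K)].

Definition open_set_condition : Prop :=
  exists U : set pt,
    [/\ open U, U !=set0,
        (exists r : R, forall x, U x -> `|x.1| <= r /\ `|x.2| <= r),
        (forall i, (i < N)%N -> Psi i @` U `<=` U) &
        (forall i j, (i < N)%N -> (j < N)%N -> i <> j ->
           Psi i @` U `&` Psi j @` U = set0)].

Definition Vn (V0 : set pt) (n : nat) : set pt :=
  [set z | exists w, word n w /\ exists x, V0 x /\ z = psiw w x].

Definition nesting (K V0 : set pt) : Prop :=
  forall n w v, word n w -> word n v -> w <> v ->
    psiw w @` K `&` psiw v @` K = psiw w @` V0 `&` psiw v @` V0.

Definition dotp (p q : pt) : R := p.1 * q.1 + p.2 * q.2.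

Definition bisector_reflection (x y z : pt) : pt :=
  let m := 2^-1 *: (x + y) in
  let d := y - x in
  z - ((2 * dotp (z - m) d) / dotp d d) *: d.

Definition symmetry (V0 : set pt) : Prop :=
  forall x y, V0 x -> V0 y -> x <> y ->
    forall n, bisector_reflection x y @` Vn V0 n = Vn V0 n.

Definition connectivity (K : set pt) : Prop :=
  forall i j, (i < N)%N -> (j < N)%N ->
    exists (m : nat) (c : nat -> nat),
      [/\ c 0%N = i, c m = j, (forall l, (l <= m)%N -> (c l < N)%N) &
          forall l, (l < m)%N -> (Psi (c l) @` K `&` Psi (c l.+1) @` K) !=set0].

Definition planar_simple_nested_fractal (K : set pt) : Prop :=
  [/\ 1 < L, (2 <= N)%N, nu 0%N = 0 & is_attractor K] /\
  [/\ open_set_condition,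
      nesting K essential_fixed_points,
      symmetry essential_fixed_points & connectivity K].

(* nu_{Delta_M} = sum_{j=M+1}^{J} L^j nu_{i_j}, J >= M+1;
   written with j = M+1+n, n = 0..m-1, m = J - M >= 1 *)
Definition complex_shift (M : int) (s : pt) : Prop :=
  exists (m : nat) (w : nat -> nat),
    [/\ (0 < m)%N, (forall n, (n < m)%N -> (w n < N)%N) &
        s = \sum_(n < m) (L ^ (M + 1 + (n%:Z))) *: nu (w n)].

Variable vs : seq pt. (* an enumeration of V_0^<0>;  k = size vs *)

Definition V0s : set pt := [set` vs].

Definition VMM (M : int) : set pt := [set (L ^ M) *: x | x in V0s].

Definition complex_vertices (M : int) (s : pt) : set pt :=
  [set (L ^ M) *: x + s | x in V0s].

Definition VMinf (M : int) : set pt :=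
  [set v | exists s, complex_shift M s /\ complex_vertices M s v].

(* barycenter of the k-gon V_M^<M> (= barycenter of K^<M>) *)
Definition barycenter (M : int) : pt :=
  (size vs)%:R^-1 *: \sum_(x <- vs) (L ^ M) *: x.

Definition rotation (c : pt) (a b : R) (z : pt) : pt :=
  c + (a * (z.1 - c.1) - b * (z.2 - c.2), b * (z.1 - c.1) + a * (z.2 - c.2)).

Definition rotations_M (M : int) : set (pt -> pt) :=
  [set rho | exists a b : R,
     [/\ a ^+ 2 + b ^+ 2 = 1, rho = rotation (barycenter M) a b &
         rho @` VMM M = VMM M]].

Definition good_labelling (M : int) (l : pt -> 'I_(size vs)) : Prop :=
  [/\ (forall x y, VMM M x -> VMM M y -> l x = l y -> x = y),
      (forall a, exists x, VMM M x /\ l x = a) &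
      (forall s, complex_shift M s ->
         exists rho, rotations_M M rho /\
           forall v, complex_vertices M s v -> l v = l (rho (v - s)))].

Definition good_labelling_property : Prop :=
  exists (M : int) (l : pt -> 'I_(size vs)), good_labelling M l.

End NestedFractal.

(* Main.v *)
Require Import Defs.
From mathcomp Require Import all_boot all_algebra.
From mathcomp Require Import all_classical all_reals all_analysis.
From mathcomp Require Import ring lra.
From mathcomp Require Import order.
Import Order.TTheory GRing.Theory Num.Theory numFieldNormedType.Exports.
Local Open Scope classical_set_scope.
Local Open Scope ring_scope.

Section Geo.
Variable R : realType.
Notation pt := (R * R)%type.

Lemma pt_eq (p q : pt) : p.1 = q.1 -> p.2 = q.2 -> p = q.
Proof. by case: p q => [a b] [c d] /= -> ->. Qed.

Lemma scalRE (a b : R) : a *: b = a * b. Proof. by []. Qed.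

Definition n2 (p : pt) : R := p.1 ^+ 2 + p.2 ^+ 2.
Definition det (p q : pt) : R := p.1 * q.2 - p.2 * q.1.

Lemma sq2_eq0 (a b : R) : a ^+ 2 + b ^+ 2 = 0 -> a = 0 /\ b = 0.
Proof.
move=> h; have ha : a ^+ 2 = 0.
  by apply/eqP; rewrite eq_le sqr_ge0 andbT -h lerDl sqr_ge0.
have hb : b ^+ 2 = 0 by rewrite ha add0r in h.
by split; apply/eqP; rewrite -sqrf_eq0; apply/eqP.
Qed.

Lemma n2_eq0 (p : pt) : n2 p = 0 -> p = 0.
Proof. by case/sq2_eq0 => h1 h2; apply: pt_eq. Qed.

Lemma refl_dist (x y z : pt) : x <> y ->
  n2 (bisector_reflection x y z - x) = n2 (z - y).
Proof.
move=> nxy.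
have hd : dotp (y - x) (y - x) != 0.
  apply/eqP => h; apply: nxy; apply/eqP; rewrite eq_sym -subr_eq0; apply/eqP.
  by apply: n2_eq0; rewrite /n2 -h /dotp !expr2.
move: hd; rewrite /n2 /bisector_reflection /dotp /=.
case: x y z {nxy} => [x1 x2] [y1 y2] [z1 z2] /= hd.
rewrite !scalRE. field. exact: hd.
Qed.

Lemma refl_dist2 (x y z : pt) : x <> y ->
  n2 (bisector_reflection x y z - y) = n2 (z - x).
Proof.
move=> nxy.
have hd : dotp (y - x) (y - x) != 0.
  apply/eqP => h; apply: nxy; apply/eqP; rewrite eq_sym -subr_eq0; apply/eqP.
  by apply: n2_eq0; rewrite /n2 -h /dotp !expr2.
move: hd; rewrite /n2 /bisector_reflection /dotp /=.
case: x y z {nxy} => [x1 x2] [y1 y2] [z1 z2] /= hd.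
rewrite !scalRE. field. exact: hd.
Qed.

Lemma n2_0 : n2 0 = 0.
Proof. by rewrite /n2 /= expr2 mulr0 addr0. Qed.

Lemma eqdist (L : R) (N : nat) (nu : nat -> pt) (V0 : set pt) (x y z : pt) :
  symmetry L N nu V0 -> V0 x -> V0 y -> V0 z -> x <> y -> z <> x -> z <> y ->
  (forall p, V0 p -> [\/ p = x, p = y | p = z]) ->
  n2 (z - x) = n2 (z - y).
Proof.
move=> hsym Vx Vy Vz nxy nzx nzy hV.
have hz : Vn L N nu V0 0 z.
  by exists [::]; split; [by [] | exists z].
have hr : Vn L N nu V0 0 (bisector_reflection x y z).
  by rewrite -(hsym x y Vx Vy nxy 0%N); exists z.
case: hr => w [[sw _] [x' [Vx' er]]].
move: sw er; case: w => // _ /= er.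
case: (hV _ Vx') => e.
- have := refl_dist x y z nxy; rewrite er -e subrr n2_0 => /esym /n2_eq0 /eqP.
  by rewrite subr_eq0 => /eqP.
- have := refl_dist2 x y z nxy; rewrite er -e subrr n2_0 => /esym /n2_eq0 /eqP.
  by rewrite subr_eq0 => /eqP.
- by rewrite -(refl_dist x y z nxy) er e.
Qed.

Lemma rot_core0 (p q u1 v1 u2 v2 S : R) : S != 0 ->
  u1 ^+ 2 + v1 ^+ 2 = S -> u2 ^+ 2 + v2 ^+ 2 = S ->
  (u2 - u1) ^+ 2 + (v2 - v1) ^+ 2 = S ->
  rotation (3^-1 *: ((p, q) + ((p + u1, q + v1) + (p + u2, q + v2))))
    (- 2^-1) ((u1 * v2 - v1 * u2) / S) (p, q) = (p + u1, q + v1).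
Proof.
move=> hS h1 h2 h3.
have hdot : u1 * u2 + v1 * v2 = S / 2.
  have e : u1 * u2 + v1 * v2 =
    ((u1 ^+ 2 + v1 ^+ 2) + (u2 ^+ 2 + v2 ^+ 2) - ((u2 - u1) ^+ 2 + (v2 - v1) ^+ 2)) / 2.
    by field.
  by rewrite e h1 h2 h3; field.
set D := u1 * v2 - v1 * u2.
have ev1 : D * v1 = (u1 * u2 + v1 * v2) * u1 - (u1 ^+ 2 + v1 ^+ 2) * u2.
  by rewrite /D; ring.
have ev2 : D * v2 = (u2 ^+ 2 + v2 ^+ 2) * u1 - (u1 * u2 + v1 * v2) * u2.
  by rewrite /D; ring.
have eu1 : D * u1 = (u1 ^+ 2 + v1 ^+ 2) * v2 - (u1 * u2 + v1 * v2) * v1.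
  by rewrite /D; ring.
have eu2 : D * u2 = (u1 * u2 + v1 * v2) * v2 - (u2 ^+ 2 + v2 ^+ 2) * v1.
  by rewrite /D; ring.
rewrite hdot h1 h2 in ev1 ev2 eu1 eu2.
rewrite /rotation; apply: pt_eq; rewrite /= !scalRE.
- have -> : D / S * (q - 3^-1 * (q + (q + v1 + (q + v2)))) = - (D * v1 + D * v2) / (3 * S).
    by field; rewrite hS.
  by rewrite ev1 ev2; field.
- have -> : D / S * (p - 3^-1 * (p + (p + u1 + (p + u2)))) = - (D * u1 + D * u2) / (3 * S).
    by field; rewrite hS.
  by rewrite eu1 eu2; field.
Qed.

Lemma rot_core (y0 y1 y2 : pt) (S : R) : S != 0 ->
  n2 (y1 - y0) = S -> n2 (y2 - y0) = S -> n2 (y2 - y1) = S ->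
  rotation (3^-1 *: (y0 + (y1 + y2))) (- 2^-1) (det (y1 - y0) (y2 - y0) / S) y0 = y1.
Proof.
case: y0 y1 y2 => [p q] [a1 b1] [a2 b2]; rewrite /n2 /det /= => hS h1 h2 h3.
have h3' : ((a2 - p) - (a1 - p)) ^+ 2 + ((b2 - q) - (b1 - q)) ^+ 2 = S.
  by rewrite -h3; congr (_ ^+ 2 + _ ^+ 2); ring.
have := rot_core0 p q (a1 - p) (b1 - q) (a2 - p) (b2 - q) S hS h1 h2 h3'.
have E : forall a p : R, p + (a - p) = a by move=> *; ring.
by rewrite !E.
Qed.

Lemma n2_sym (p q : pt) : n2 (p - q) = n2 (q - p).
Proof. by case: p q => [a b] [c d]; rewrite /n2 /=; ring. Qed.

Lemma det_cyc (y0 y1 y2 : pt) : det (y2 - y1) (y0 - y1) = det (y1 - y0) (y2 - y0).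
Proof. by case: y0 y1 y2 => [a b] [c d] [e f]; rewrite /det /=; ring. Qed.

Lemma det_swap (y0 y1 y2 : pt) : det (y2 - y0) (y1 - y0) = - det (y1 - y0) (y2 - y0).
Proof. by case: y0 y1 y2 => [a b] [c d] [e f]; rewrite /det /=; ring. Qed.

Lemma det2_0 (u1 v1 u2 v2 S : R) :
  u1 ^+ 2 + v1 ^+ 2 = S -> u2 ^+ 2 + v2 ^+ 2 = S ->
  (u2 - u1) ^+ 2 + (v2 - v1) ^+ 2 = S ->
  (u1 * v2 - v1 * u2) ^+ 2 = 3 / 4 * S ^+ 2.
Proof.
move=> h1 h2 h3.
have hdot : u1 * u2 + v1 * v2 = S / 2.
  have e : u1 * u2 + v1 * v2 =
    ((u1 ^+ 2 + v1 ^+ 2) + (u2 ^+ 2 + v2 ^+ 2) - ((u2 - u1) ^+ 2 + (v2 - v1) ^+ 2)) / 2.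
    by field.
  by rewrite e h1 h2 h3; field.
have -> : (u1 * v2 - v1 * u2) ^+ 2 =
  (u1 ^+ 2 + v1 ^+ 2) * (u2 ^+ 2 + v2 ^+ 2) - (u1 * u2 + v1 * v2) ^+ 2 by ring.
by rewrite h1 h2 hdot; field.
Qed.

Lemma det2 (y0 y1 y2 : pt) (S : R) :
  n2 (y1 - y0) = S -> n2 (y2 - y0) = S -> n2 (y2 - y1) = S ->
  det (y1 - y0) (y2 - y0) ^+ 2 = 3 / 4 * S ^+ 2.
Proof.
case: y0 y1 y2 => [p q] [a1 b1] [a2 b2]; rewrite /n2 /det /= => h1 h2 h3.
have h3' : ((a2 - p) - (a1 - p)) ^+ 2 + ((b2 - q) - (b1 - q)) ^+ 2 = S.
  by rewrite -h3; congr (_ ^+ 2 + _ ^+ 2); ring.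
exact: det2_0 h1 h2 h3'.
Qed.

Lemma rot_ab (y0 y1 y2 : pt) (S : R) : S != 0 ->
  n2 (y1 - y0) = S -> n2 (y2 - y0) = S -> n2 (y2 - y1) = S ->
  (- 2^-1) ^+ 2 + (det (y1 - y0) (y2 - y0) / S) ^+ 2 = 1 :> R.
Proof.
move=> hS h1 h2 h3; rewrite expr_div_n (det2 _ _ _ _ h1 h2 h3).
by field.
Qed.

Lemma rot_cyc (y0 y1 y2 : pt) (S : R) : S != 0 ->
  n2 (y1 - y0) = S -> n2 (y2 - y0) = S -> n2 (y2 - y1) = S ->
  let rho := rotation (3^-1 *: (y0 + (y1 + y2))) (- 2^-1) (det (y1 - y0) (y2 - y0) / S) in
  [/\ rho y0 = y1, rho y1 = y2 & rho y2 = y0].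
Proof.
move=> hS h1 h2 h3 rho; split.
- exact: rot_core.
- have h1' : n2 (y0 - y1) = S by rewrite n2_sym.
  have h2' : n2 (y0 - y2) = S by rewrite n2_sym.
  have := rot_core _ _ _ _ hS h3 h1' h2'.
  rewrite (_ : y1 + (y2 + y0) = y0 + (y1 + y2)); last by rewrite addrA addrC.
  by rewrite det_cyc.
- have h1' : n2 (y0 - y2) = S by rewrite n2_sym.
  have h2' : n2 (y1 - y2) = S by rewrite n2_sym.
  have := rot_core _ _ _ _ hS h1' h2' h1.
  rewrite (_ : y2 + (y0 + y1) = y0 + (y1 + y2)); last by rewrite addrC -addrA.
  by rewrite (det_cyc y1 y2 y0) det_cyc.
Qed.

Lemma rot_id (c z : pt) : rotation c 1 0 z = z.
Proof. by case: c z => [a b] [p q]; apply: pt_eq; rewrite /rotation /=; ring. Qed.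

Lemma img_cyc (f : pt -> pt) (y0 y1 y2 : pt) : f y0 = y1 -> f y1 = y2 -> f y2 = y0 ->
  f @` [set` [:: y0; y1; y2]] = [set` [:: y0; y1; y2]].
Proof.
move=> f0 f1 f2; apply/seteqP; split => y /=.
- case=> x /=; rewrite !inE => /or3P [] /eqP -> <-;
    by rewrite ?f0 ?f1 ?f2 eqxx ?orbT.
- rewrite !inE => /or3P [] /eqP ->.
  + by exists y2; rewrite /= ?inE ?eqxx ?orbT.
  + by exists y0; rewrite /= ?inE ?eqxx ?orbT.
  + by exists y1; rewrite /= ?inE ?eqxx ?orbT.
Qed.

Lemma set3C (a b c : pt) : [set` [:: a; b; c]] = [set` [:: a; c; b]].
Proof.
apply/seteqP; split => y /=; rewrite !inE => /or3P [] ->; by rewrite ?orbT.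
Qed.
Definition inLat (d1 d2 p : pt) := exists a b : int, p = a%:~R *: d1 + b%:~R *: d2.

Section L2.
Variables d1 d2 : pt.

Lemma inLat0 : inLat d1 d2 0.
Proof. by exists 0%Z, 0%Z; rewrite !mulr0z !scale0r addr0. Qed.

Lemma inLatD p q : inLat d1 d2 p -> inLat d1 d2 q -> inLat d1 d2 (p + q).
Proof.
move=> [a [b ->]] [a' [b' ->]]; exists (a + a')%Z, (b + b')%Z.
by rewrite !intrD !scalerDl addrACA.
Qed.

Lemma inLatN p : inLat d1 d2 p -> inLat d1 d2 (- p).
Proof.
move=> [a [b ->]]; exists (- a)%Z, (- b)%Z.
by rewrite !intrN !scaleNr opprD.
Qed.

Lemma inLatB p q : inLat d1 d2 p -> inLat d1 d2 q -> inLat d1 d2 (p - q).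
Proof. by move=> hp hq; apply: inLatD => //; apply: inLatN. Qed.

Lemma inLat1 : inLat d1 d2 d1.
Proof. by exists 1%Z, 0%Z; rewrite mulr0z scale0r addr0 scale1r. Qed.

Lemma inLat2 : inLat d1 d2 d2.
Proof. by exists 0%Z, 1%Z; rewrite mulr0z scale0r add0r scale1r. Qed.

Lemma inLatZ (k : int) p : inLat d1 d2 p -> inLat d1 d2 (k%:~R *: p).
Proof.
move=> [a [b ->]]; exists (k * a)%Z, (k * b)%Z.
by rewrite !intrM scalerDr !scalerA.
Qed.

Lemma inLat_sum m (F : 'I_m -> pt) :
  (forall i, inLat d1 d2 (F i)) -> inLat d1 d2 (\sum_(i < m) F i).
Proof.
move=> hF; elim/big_ind: _ => //; first exact: inLat0.
by move=> x y; apply: inLatD.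
Qed.

Lemma inLat_scale (L : R) : inLat d1 d2 (L *: d1) -> inLat d1 d2 (L *: d2) ->
  forall p, inLat d1 d2 p -> inLat d1 d2 (L *: p).
Proof.
move=> h1 h2 p [a [b ->]].
rewrite scalerDr !scalerA ![L * _]mulrC -!scalerA.
by apply: inLatD; apply: inLatZ.
Qed.

Lemma inLat_exp (L : R) : inLat d1 d2 (L *: d1) -> inLat d1 d2 (L *: d2) ->
  forall n p, inLat d1 d2 p -> inLat d1 d2 (L ^+ n *: p).
Proof.
move=> h1 h2; elim=> [|n IH] p hp; first by rewrite expr0 scale1r.
by rewrite exprS -scalerA; apply: inLat_scale => //; apply: IH.
Qed.

Lemma lin_uniq (r t : R) : det d1 d2 != 0 -> r *: d1 + t *: d2 = 0 -> r = 0 /\ t = 0.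
Proof.
case: d1 d2 => [u1 v1] [u2 v2]; rewrite /det /= => hD E.
have e1 : r * u1 + t * u2 = 0 by have := congr1 fst E.
have e2 : r * v1 + t * v2 = 0 by have := congr1 snd E.
have hr : r * (u1 * v2 - v1 * u2) = 0.
  have -> : r * (u1 * v2 - v1 * u2) = v2 * (r * u1 + t * u2) - u2 * (r * v1 + t * v2) by ring.
  by rewrite e1 e2 !mulr0 subr0.
have ht : t * (u1 * v2 - v1 * u2) = 0.
  have -> : t * (u1 * v2 - v1 * u2) = u1 * (r * v1 + t * v2) - v1 * (r * u1 + t * u2) by ring.
  by rewrite e1 e2 !mulr0 subr0.
move/eqP: hr; move/eqP: ht; rewrite !mulf_eq0 (negbTE hD) !orbF => /eqP -> /eqP ->.
by [].
Qed.

Lemma int_uniq (a b a' b' : int) : det d1 d2 != 0 ->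
  a%:~R *: d1 + b%:~R *: d2 = a'%:~R *: d1 + b'%:~R *: d2 -> a = a' /\ b = b'.
Proof.
move=> hD E.
have : (a%:~R - a'%:~R) *: d1 + (b%:~R - b'%:~R) *: d2 = 0 :> pt.
  by rewrite !scalerBl addrACA E -opprD subrr.
move/(lin_uniq _ _ hD) => [/eqP h1 /eqP h2].
move: h1 h2; rewrite !subr_eq0 => /eqP h1 /eqP h2.
by split; apply: (@intr_inj R).
Qed.

Definition fZ (a b : int) : 'Z_3 := a%:~R + b%:~R * 2.

Definition lab (x0 : pt) (p : pt) : 'Z_3 :=
  match pselect (exists ab : int * int, p = x0 + (ab.1%:~R *: d1 + ab.2%:~R *: d2)) with
  | left H => fZ (projT1 (cid H)).1 (projT1 (cid H)).2
  | right _ => 0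
  end.

Lemma lab_eq x0 (a b : int) : det d1 d2 != 0 ->
  lab x0 (x0 + (a%:~R *: d1 + b%:~R *: d2)) = fZ a b.
Proof.
move=> hD; rewrite /lab; case: pselect => [H|H]; last first.
  by exfalso; apply: H; exists (a, b).
case: (cid H) => [[a' b'] /= E].
by have [-> ->] := int_uniq _ _ _ _ hD (addrI _ E).
Qed.

Lemma fZD a b a' b' : fZ (a + a') (b + b') = fZ a b + fZ a' b'.
Proof. by rewrite /fZ !intrD mulrDl addrACA. Qed.

End L2.
Lemma scale_sub_id (L : R) (p q : pt) :
  L *: (p - q) = (L *: p - p) - (L *: q - q) + (p - q).
Proof. by case: p q => [a b] [c d]; apply: pt_eq; rewrite /= !scalRE; ring. Qed.
End Geo.
Arguments n2 {R}.
Arguments det {R}.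
Arguments inLat {R}.
Arguments lab {R}.


Theorem theorem3p11 (R : realType) (L : R) (N : nat) (nu : nat -> (R * R)%type)
    (K : set (R * R)) (vs : seq (R * R)) :
  planar_simple_nested_fractal L N nu K ->
  uniq vs -> [set` vs] = essential_fixed_points L N nu ->
  size vs = 3%N ->
  good_labelling_property L N nu vs.
Proof.
move=> [[hL hN hnu0 hatt] [hosc hnest hsym hconn]] huniq hV hsize.
case: vs huniq hV hsize => [|x0 [|x1 [|x2 [|? ?]]]] //= huniq hV _.
move: huniq; rewrite !inE !negb_or andbT => /andP [/andP [n01 n02] n12].
set V0 := essential_fixed_points L N nu in hV hnest hsym.
have hVx : forall p, V0 p -> [\/ p = x0, p = x1 | p = x2].
  move=> p; rewrite -hV /= !inE => /or3P [] /eqP ->; [exact: Or31|exact: Or32|exact: Or33].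
have V0x0 : V0 x0 by rewrite -hV /= !inE eqxx.
have V0x1 : V0 x1 by rewrite -hV /= !inE eqxx ?orbT.
have V0x2 : V0 x2 by rewrite -hV /= !inE eqxx ?orbT.
have d01 : x0 <> x1 by apply/eqP.
have d02 : x0 <> x2 by apply/eqP.
have d12 : x1 <> x2 by apply/eqP.
have d10 : x1 <> x0 by move=> e; apply: d01.
have d20 : x2 <> x0 by move=> e; apply: d02.
have d21 : x2 <> x1 by move=> e; apply: d12.
have e1 := eqdist _ _ _ _ _ x0 x1 x2 hsym V0x0 V0x1 V0x2 d01 d20 d21 hVx.
have e2 : n2 (x0 - x1) = n2 (x0 - x2).
  apply: (eqdist _ _ _ _ _ x1 x2 x0 hsym V0x1 V0x2 V0x0 d12 d01 d02).
  by move=> p /hVx [] ->; [exact: Or33|exact: Or31|exact: Or32].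
set S := n2 (x1 - x0).
have h1 : n2 (x1 - x0) = S by [].
have h2 : n2 (x2 - x0) = S by rewrite n2_sym -e2 n2_sym.
have h3 : n2 (x2 - x1) = S by rewrite -e1 h2.
have hS : S != 0.
  apply/eqP => /n2_eq0 /eqP; rewrite subr_eq0 => /eqP; exact: d10.
set d1 := x1 - x0.
set d2 := x2 - x0.
have hD : det d1 d2 != 0.
  apply/eqP => h; have := det2 _ _ _ _ _ h1 h2 h3; rewrite -/d1 -/d2 h expr0n /=.
  move/esym/eqP; rewrite mulf_eq0 expf_eq0 /= (negbTE hS) orbF => /eqP.
  lra.
have hL0 : L != 0 by lra.
have hfix : forall x, V0 x -> exists i, (i < N)%N /\ L *: nu i = L *: x - x.
  move=> x [[i [hi hPsi]] _]; exists i; split => //.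
  rewrite -[in L *: x]hPsi /Psi scalerDr scalerA mulfV // scale1r.
  by rewrite addrAC subrr add0r.
have hvs : forall x, V0 x -> inLat d1 d2 (x - x0).
  move=> x /hVx [] ->; [rewrite subrr; exact: inLat0 | exact: inLat1 | exact: inLat2].
have hvsB : forall x y, V0 x -> V0 y -> inLat d1 d2 (x - y).
  move=> x y hx hy; have -> : x - y = (x - x0) - (y - x0) by rewrite opprB addrA subrK.
  exact: inLatB (hvs _ hx) (hvs _ hy).
have hLnu : forall i, (i < N)%N -> inLat d1 d2 (L *: nu i).
  move=> i hi; have [m [c [c0 cm hcN hc]]] := hconn 0%N i (ltnW hN) hi.
  suff : forall l, (l <= m)%N -> inLat d1 d2 (L *: nu (c l)).
    by move/(_ m (leqnn m)); rewrite cm.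
  elim=> [|l IH] hl; first by rewrite c0 hnu0 scaler0; exact: inLat0.
  have hlm : (l < m)%N := hl.
  have IH' := IH (ltnW hl).
  case: (hc l hlm) => p [[x Kx ex] [y Ky ey]].
  have ha := hcN l (ltnW hl).
  have hb := hcN l.+1 hl.
  case: (eqVneq (c l) (c l.+1)) => [<- // | ne].
  have hw1 : word N 1 [:: c l] by split => //=; rewrite ha.
  have hw2 : word N 1 [:: c l.+1] by split => //=; rewrite hb.
  have hne : [:: c l] <> [:: c l.+1] by case=> /eqP; rewrite (negbTE ne).
  have hn := hnest 1%N [:: c l] [:: c l.+1] hw1 hw2 hne.
  have : (psiw L nu [:: c l] @` V0 `&` psiw L nu [:: c l.+1] @` V0) p.
    by rewrite -hn; split; [exists x | exists y].
  case=> [[x' Vx' ex'] [y' Vy' ey']].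
  move: ex' ey'; rewrite /psiw /= => ex' ey'.
  have E1 := congr1 (fun q => L *: q) (etrans ex' (esym ey')).
  move: E1; rewrite /Psi /= !scalerDr !scalerA mulfV // !scale1r => E1.
  have -> : L *: nu (c l.+1) = L *: nu (c l) + (x' - y').
    apply: (addrI y'); rewrite -E1.
    by rewrite addrCA (addrCA y') subrr addr0 addrC.
  exact: inLatD IH' (hvsB _ _ Vx' Vy').
have hLx : forall x, V0 x -> inLat d1 d2 (L *: x - x).
  by move=> x /hfix [i [hi <-]]; apply: hLnu.
have hLd1 : inLat d1 d2 (L *: d1).
  rewrite /d1 scale_sub_id; apply: inLatD; last exact: inLat1.
  exact: inLatB (hLx _ V0x1) (hLx _ V0x0).
have hLd2 : inLat d1 d2 (L *: d2).
  rewrite /d2 scale_sub_id; apply: inLatD; last exact: inLat2.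
  exact: inLatB (hLx _ V0x2) (hLx _ V0x0).
have VMM0 : VMM L [:: x0; x1; x2] 0 = [set` [:: x0; x1; x2]].
  rewrite /VMM expr0z; apply/seteqP; split => y /=.
  - by case=> x hx <-; rewrite scale1r.
  - by move=> hy; exists y => //; rewrite scale1r.
have bary : barycenter L [:: x0; x1; x2] 0 = 3^-1 *: (x0 + (x1 + x2)).
  by rewrite /barycenter /= !big_cons big_nil expr0z !scale1r addr0.
pose l := lab d1 d2 x0.
have hl : forall a b : int, l (x0 + (a%:~R *: d1 + b%:~R *: d2)) = fZ a b.
  by move=> a b; apply: lab_eq.
have ex0 : x0 + ((0:int)%:~R *: d1 + (0:int)%:~R *: d2) = x0.
  by rewrite !mulr0z !scale0r !addr0.
have ex1 : x0 + ((1:int)%:~R *: d1 + (0:int)%:~R *: d2) = x1.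
  by rewrite !mulr0z !scale0r !addr0 scale1r /d1 addrC subrK.
have ex2 : x0 + ((0:int)%:~R *: d1 + (1:int)%:~R *: d2) = x2.
  by rewrite !mulr0z !scale0r !add0r scale1r /d2 addrC subrK.
have lx0 : l x0 = 0 by have := hl 0%Z 0%Z; rewrite ex0 => ->; apply/val_inj.
have lx1 : l x1 = 1 by have := hl 1%Z 0%Z; rewrite ex1 => ->; apply/val_inj.
have lx2 : l x2 = 2 by have := hl 0%Z 1%Z; rewrite ex2 => ->; apply/val_inj.
exists 0%Z, l; split.
- move=> x y; rewrite VMM0 /= !inE => /or3P [] /eqP -> /or3P [] /eqP ->;
    rewrite ?lx0 ?lx1 ?lx2 //; by move/(congr1 val).
- case=> [[|[|[|n]]] Ha] //.
  + by exists x0; split; [rewrite VMM0 /= !inE eqxx | rewrite lx0; apply/val_inj].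
  + by exists x1; split; [rewrite VMM0 /= !inE eqxx ?orbT | rewrite lx1; apply/val_inj].
  + by exists x2; split; [rewrite VMM0 /= !inE eqxx ?orbT | rewrite lx2; apply/val_inj].
move=> s [m [w [hm hw hseq]]].
have hs : inLat d1 d2 s.
  rewrite hseq; apply: inLat_sum => n.
  rewrite add0r -intS -exprnP exprSr -scalerA.
  by apply: inLat_exp => //; apply: hLnu; apply: hw.
move: hs => [al [be hsab]].
pose k := fZ al be.
have hlx : forall a b : int, l (x0 + (a%:~R *: d1 + b%:~R *: d2) + s) = fZ a b + k.
  move=> a b; rewrite hsab.
  have -> : x0 + (a%:~R *: d1 + b%:~R *: d2) + (al%:~R *: d1 + be%:~R *: d2) =
    x0 + ((a + al)%:~R *: d1 + (b + be)%:~R *: d2).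
    by apply: pt_eq; rewrite /= !scalRE; ring.
  by rewrite hl fZD.
have lxs0 : l (x0 + s) = l x0 + k.
  by have := hlx 0%Z 0%Z; rewrite ex0 -(hl 0%Z 0%Z) ex0.
have lxs1 : l (x1 + s) = l x1 + k.
  by have := hlx 1%Z 0%Z; rewrite ex1 -(hl 1%Z 0%Z) ex1.
have lxs2 : l (x2 + s) = l x2 + k.
  by have := hlx 0%Z 1%Z; rewrite ex2 -(hl 0%Z 1%Z) ex2.
suff key : exists rho, (rotations_M L [:: x0; x1; x2] 0%Z rho) /\ ([/\ l (rho x0) = l x0 + k, l (rho x1) = l x1 + k & l (rho x2) = l x2 + k]).
  case: key => rho [hr [r0 r1 r2]]; exists rho; split => // v [x hx <-].
  rewrite expr0z scale1r addrK; move: hx; rewrite /V0s /= !inE => /or3P [] /eqP ->.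
  - by rewrite lxs0 r0.
  - by rewrite lxs1 r1.
  - by rewrite lxs2 r2.
have hk3 : forall z : 'Z_3, z = 0 \/ z = 1 \/ z = 2.
  by case=> [[|[|[|n]]] H]; [left|right;left|right;right|by []]; exact/val_inj.
case: (hk3 k) => [hk|[hk|hk]].
- exists (rotation (barycenter L [:: x0; x1; x2] 0) 1 0); split; last first.
    by rewrite !rot_id hk !addr0.
  exists 1, 0; split => //; first by rewrite expr1n expr0n /= addr0.
  have -> : rotation (barycenter L [:: x0; x1; x2] 0) 1 0 = id.
    by apply/funext => z; apply: rot_id.
  exact: image_id.
- have [r0 r1 r2] := rot_cyc _ _ _ _ _ hS h1 h2 h3.
  exists (rotation (barycenter L [:: x0; x1; x2] 0) (- 2^-1) (det (x1 - x0) (x2 - x0) / S)).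
  split; last first.
    rewrite bary r0 r1 r2 lx0 lx1 lx2 hk; split; exact/val_inj.
  exists (- 2^-1), (det (x1 - x0) (x2 - x0) / S); split => //.
    exact: (rot_ab _ _ _ _ _ hS h1 h2 h3).
  by rewrite VMM0 bary; apply: img_cyc.
- have h3' : n2 (x1 - x2) = S by rewrite n2_sym.
  have [r0 r1 r2] := rot_cyc _ _ _ _ _ hS h2 h1 h3'.
  have bary' : barycenter L [:: x0; x1; x2] 0 = 3^-1 *: (x0 + (x2 + x1)).
    by rewrite bary (addrC x2).
  exists (rotation (barycenter L [:: x0; x1; x2] 0) (- 2^-1) (det (x2 - x0) (x1 - x0) / S)).
  split; last first.
    rewrite bary' r0 r1 r2 lx0 lx1 lx2 hk; split; exact/val_inj.
  exists (- 2^-1), (det (x2 - x0) (x1 - x0) / S); split => //.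
    exact: (rot_ab _ _ _ _ _ hS h2 h1 h3').
  by rewrite VMM0 bary' set3C; apply: img_cyc.
Qed.
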